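(* Let $G$ be a finite simple graph of order $n$ having no connected component of order less than $3$. Then $s_g(G)\leq s_g^*(G)\leq 2n$.
   Context: For an Abelian group $\mathcal{G}$ (identity $0$, $\mathcal{G}^*=\mathcal{G}\setminus\{0\}$) and a labeling $f\colon E(G)\to\mathcal{G}$, the weighted degree of a vertex $v$ is $w_f(v)=\sum_{u\in N(v)} f(uv)$. The labeling is $\mathcal{G}$-irregular if all weighted degrees are pairwise distinct. The group irregularity strength $s_g(G)$ is the least positive integer $k$ such that for every Abelian group $\mathcal{G}$ of order $k$ there exists a $\mathcal{G}$-irregular labeling $f\colon E(G)\to\mathcal{G}$. The nowhere-zero group irregularity strength $s_g^*(G)$ is the least positive integer $k$ such that for every Abelian group $\mathcal{G}$ of order $k$ there exists a $\mathcal{G}$-irregular labeling $f\colon E(G)\to\mathcal{G}^*$. *)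

(* Defs.v *)
From HB Require Import structures.
From mathcomp Require Import all_boot all_algebra.
Set Implicit Arguments. Unset Strict Implicit. Unset Printing Implicit Defensive.
Import GRing.Theory.
Local Open Scope ring_scope.

Definition simple_graph (T : finType) (e : rel T) : Prop :=
  symmetric e /\ irreflexive e.

(* An edge uv is the unordered pair [set u; v]; an edge labeling with values
   in A is a function on 2-subsets (only its values on edges matter). *)
Definition wdeg (T : finType) (e : rel T) (A : finZmodType)
  (f : {set T} -> A) (v : T) : A :=
  \sum_(u | e v u) f [set v; u].

Definition irregular (T : finType) (e : rel T) (A : finZmodType)
  (f : {set T} -> A) : Prop :=
  injective (wdeg e f).

Definition nowhere_zero (T : finType) (e : rel T) (A : finZmodType)
  (f : {set T} -> A) : Prop :=
  forall u v, e u v -> f [set u; v] != 0.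

Definition sg_prop (T : finType) (e : rel T) (k : nat) : Prop :=
  forall A : finZmodType, #|A| = k ->
    exists f : {set T} -> A, irregular e f.

Definition sgstar_prop (T : finType) (e : rel T) (k : nat) : Prop :=
  forall A : finZmodType, #|A| = k ->
    exists f : {set T} -> A, nowhere_zero e f /\ irregular e f.

Definition least_pos (P : nat -> Prop) (k : nat) : Prop :=
  (0 < k)%N /\ P k /\ forall j, (0 < j)%N -> (j < k)%N -> ~ P j.

Definition is_sg (T : finType) (e : rel T) (k : nat) : Prop := least_pos (sg_prop e) k.
Definition is_sgstar (T : finType) (e : rel T) (k : nat) : Prop := least_pos (sgstar_prop e) k.

Definition no_small_component (T : finType) (e : rel T) : Prop :=
  forall x : T, (3 <= #|[set y | connect e x y]|)%N.

(* Main.v *)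
Require Import Defs.
From HB Require Import structures.
From mathcomp Require Import all_boot all_algebra zify.
Set Implicit Arguments. Unset Strict Implicit. Unset Printing Implicit Defensive.
Import GRing.Theory.

Section Graph.
Variable T : finType.
Implicit Types (E : rel T) (u v w x y z : T).

Definition nb E x := [set y | E x y].
Definition deg E x := #|nb E x|.
Definition rem E u v : rel T := fun a b => E a b && ([set a; b] != [set u; v]).
Definition Lgood E := forall x y, E x y -> (1 < deg E x)%N || (1 < deg E y)%N.
Definition act E := [set x | [exists y, E x y]].
Definition ne E := #|[set p : T * T | E p.1 p.2]|.

Lemma set2_mem (a b c d : T) : [set a; b] = [set c; d] -> (a == c) || (a == d).
Proof. by move/setP/(_ a); rewrite !inE eqxx /= => <-. Qed.

Lemma set2C (a b : T) : [set a; b] = [set b; a].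
Proof. by apply/setP=> z; rewrite !inE orbC. Qed.

Lemma set2_neq_out w y u v : w != u -> w != v -> [set w; y] != [set u; v].
Proof. by move=> wu wv; apply/negP => /eqP/set2_mem; rewrite (negbTE wu) (negbTE wv). Qed.

Lemma set2_eq_l u v y : u != v -> ([set u; y] == [set u; v]) = (y == v).
Proof.
move=> uv; apply/eqP/eqP => [|->//].
move/setP => H; have := H y; have := H v; rewrite !inE !eqxx /= orbT.
by case/orP=> /eqP vu //; rewrite vu eqxx in uv.
Qed.

Lemma set2_eq_r u v y : u != v -> ([set v; y] == [set u; v]) = (y == u).
Proof. by move=> uv; rewrite [X in _ == X]setUC set2_eq_l // eq_sym. Qed.

Lemma rem_sym E u v : symmetric E -> symmetric (rem E u v).
Proof. by move=> sE a b; rewrite /rem sE setUC. Qed.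

Lemma rem_irr E u v : irreflexive E -> irreflexive (rem E u v).
Proof. by move=> iE a; rewrite /rem iE. Qed.

Lemma remE E u v a b : rem E u v a b -> E a b.
Proof. by case/andP. Qed.

Lemma nb_rem_out E u v w : w != u -> w != v -> nb (rem E u v) w = nb E w.
Proof. by move=> wu wv; apply/setP=> y; rewrite !inE /rem set2_neq_out ?andbT. Qed.

Lemma nb_rem_u E u v : u != v -> nb (rem E u v) u = nb E u :\ v.
Proof. by move=> uv; apply/setP=> y; rewrite !inE /rem set2_eq_l // andbC. Qed.

Lemma nb_rem_v E u v : symmetric E -> u != v -> nb (rem E u v) v = nb E v :\ u.
Proof.
by move=> sE uv; apply/setP=> y; rewrite !inE /rem set2_eq_r // andbC.
Qed.


Lemma deg_rem_u E u v : E u v -> u != v -> deg (rem E u v) u = (deg E u).-1.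
Proof.
by move=> Euv uv; rewrite /deg nb_rem_u // [in RHS](cardsD1 v) [v \in _]inE Euv add1n.
Qed.

Lemma deg_rem_v E u v : symmetric E -> E u v -> u != v ->
  deg (rem E u v) v = (deg E v).-1.
Proof.
by move=> sE Euv uv; rewrite /deg nb_rem_v // [in RHS](cardsD1 u) [u \in _]inE sE Euv add1n.
Qed.

Lemma deg_rem_out E u v w : w != u -> w != v -> deg (rem E u v) w = deg E w.
Proof. by move=> wu wv; rewrite /deg nb_rem_out. Qed.

Lemma ne_rem E u v : E u v -> (ne (rem E u v) < ne E)%N.
Proof.
move=> Euv; apply: proper_card; apply/properP; split.
  by apply/subsetP=> p; rewrite !inE => /andP[].
by exists (u, v); rewrite !inE /= ?Euv // /rem eqxx andbF.
Qed.

Lemma in_act E x : (x \in act E) = (0 < deg E x)%N.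
Proof.
rewrite inE /deg card_gt0; apply/existsP/set0Pn => [[y Ey]|[y]].
  by exists y; rewrite inE.
by rewrite inE; exists y.
Qed.

Lemma act_rem E u v : act (rem E u v) \subset act E.
Proof.
by apply/subsetP=> x; rewrite !inE => /existsP[y /andP[Ey _]]; apply/existsP; exists y.
Qed.

Lemma nb_deg1 E x y : E x y -> deg E x = 1%N -> nb E x = [set y].
Proof.
move=> Exy /eqP/cards1P[z hz]; have : y \in nb E x by rewrite inE.
by rewrite hz inE => /eqP ->.
Qed.


Definition cond E u v := (2 < deg E u)%N \/ deg E u = 1%N \/
  (forall q, E u q -> q != v -> (1 < deg E q)%N).

Lemma irr_neq' E u v : irreflexive E -> E u v -> u != v.
Proof. by move=> iE; apply: contraTneq => ->; rewrite iE. Qed.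

Lemma end_ok E u v w o : symmetric E -> irreflexive E -> E u v ->
  ((w == u) && (o == v)) || ((w == v) && (o == u)) -> cond E w o ->
  forall q, rem E u v w q -> (1 < deg (rem E u v) w)%N || (1 < deg (rem E u v) q)%N.
Proof.
move=> sE iE Euv H C q Ewq.
have uv := irr_neq' iE Euv.
have Eq : E w q by case/andP: Ewq.
have qw : q != w by rewrite eq_sym (irr_neq' iE Eq).
have [hdeg qo Ewo] : [/\ deg (rem E u v) w = (deg E w).-1, q != o & E w o].
  case/orP: H => /andP[/eqP wu /eqP ov]; subst w o.
    by rewrite deg_rem_u //; split=> //; move: Ewq; rewrite /rem /= set2_eq_l // => /andP[].
  by rewrite deg_rem_v // sE; split=> //; move: Ewq; rewrite /rem /= set2_eq_r // => /andP[].
have hq : deg (rem E u v) q = deg E q.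
  by case/orP: H => /andP[/eqP wu /eqP ov]; subst; rewrite deg_rem_out // eq_sym.
case: C => [C|[C|C]].
- by rewrite hdeg; apply/orP; left; move: C; case: (deg E w) => // [[]] // [] //.
- by move: qo; have := nb_deg1 Eq C; move/setP/(_ o); rewrite !inE Ewo eq_sym => <-.
- by rewrite hq C ?orbT.
Qed.

Lemma rem_Lgood E u v : symmetric E -> irreflexive E -> Lgood E -> E u v ->
  cond E u v -> cond E v u -> Lgood (rem E u v).
Proof.
move=> sE iE LE Euv Cu Cv p q Epq.
have sE' := rem_sym u v sE.
have [pu|pu] := eqVneq p u.
  subst p; by apply: (end_ok sE iE Euv _ Cu) Epq; rewrite ?eqxx.
have [pv|pv] := eqVneq p v.
  subst p; by apply: (end_ok sE iE Euv _ Cv) Epq; rewrite ?eqxx ?orbT.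
have [qu|qu] := eqVneq q u.
  by subst q; rewrite orbC; apply: (end_ok sE iE Euv _ Cu); rewrite ?eqxx // sE'.
have [qv|qv] := eqVneq q v.
  by subst q; rewrite orbC; apply: (end_ok sE iE Euv _ Cv); rewrite ?eqxx ?orbT // sE'.
by rewrite !deg_rem_out //; apply: LE; case/andP: Epq.
Qed.

Lemma deg2_other E x y : deg E x = 2 -> E x y -> exists w, w != y /\ nb E x = [set y; w].
Proof.
move=> /eqP/cards2P[a [b [ab hab]]] Exy.
have : y \in nb E x by rewrite inE.
rewrite hab !inE => /orP[]/eqP->; first by exists b; rewrite eq_sym.
by exists a; rewrite set2C.
Qed.

Lemma deg_pos E x y : E x y -> (0 < deg E x)%N.
Proof. by move=> Exy; rewrite /deg card_gt0; apply/set0Pn; exists y; rewrite inE. Qed.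

Lemma in_nb E x y : (y \in nb E x) = E x y.
Proof. by rewrite inE. Qed.

Lemma deg2_step E y a b : symmetric E -> irreflexive E -> Lgood E ->
  nb E y = [set a; b] -> a != b -> deg E a = 1%N -> (1 < deg E b)%N ->
  exists u v, E u v /\ Lgood (rem E u v).
Proof.
move=> sE iE LE hy ab da db.
have Eya : E y a by rewrite -in_nb hy set21.
exists y, a; split => //; apply: rem_Lgood => //.
  right; right => q; rewrite -in_nb hy !inE => /orP[/eqP->|/eqP->]; first by rewrite eqxx.
  by [].
by right; left.
Qed.

Lemma structure E : symmetric E -> irreflexive E -> Lgood E -> (exists a b, E a b) ->
  (exists u v, E u v /\ Lgood (rem E u v)) \/
  (exists x y z, x != z /\ [/\ E x y, E y z, nb E x = [set y], nb E z = [set y]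
                   & nb E y = [set x; z]]).
Proof.
move=> sE iE LE [a0 [b0 Eab]].
have [/existsP[y dy]|no3] := boolP [exists y, (2 < deg E y)%N].
  have /set0Pn[v] : nb E y != set0 by rewrite -card_gt0 ltnW // ltnW.
  rewrite in_nb => Eyv; left.
  have Evy : E v y by rewrite sE.
  have dv1 := deg_pos Evy.
  have [dv2|dv2] := eqVneq (deg E v) 2.
    have [w [wy hv]] := deg2_other dv2 Evy.
    have Evw : E v w by rewrite -in_nb hv set22.
    have [dw|dw] := boolP (1 < deg E w)%N.
      exists y, v; split => //; apply: rem_Lgood => //; first by left.
      right; right => q; rewrite -in_nb hv !inE => /orP[]/eqP-> //.
      by rewrite eqxx.
    have dw1 : deg E w = 1%N.
      by have := deg_pos (y:=v) (etrans (sE w v) Evw); move: dw; lia.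
    exists v, w; split => //; apply: rem_Lgood => //; last by right; left.
    right; right => q; rewrite -in_nb hv !inE => /orP[]/eqP-> //; last by rewrite eqxx.
    by move=> _; apply: ltn_trans dy.
  exists y, v; split => //; apply: rem_Lgood => //; first by left.
  have [dv|dv] := eqVneq (deg E v) 1%N; first by right; left.
  by left; move: dv1 dv2 dv; lia.
have le2 : forall x, (deg E x <= 2)%N.
  by move=> x; rewrite leqNgt; apply: contra no3 => h; apply/existsP; exists x.
suff main2 : forall y, deg E y = 2 -> (exists u v, E u v /\ Lgood (rem E u v)) \/
  (exists x y z, x != z /\ [/\ E x y, E y z, nb E x = [set y], nb E z = [set y]
                   & nb E y = [set x; z]]).
  have := LE _ _ Eab; case/orP => h; [apply: (main2 a0) | apply: (main2 b0)].
    by have := le2 a0; lia.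
  by have := le2 b0; lia.
move=> y /eqP/cards2P[p [q [pq hy]]].
have Eyp : E y p by rewrite -in_nb hy set21.
have Eyq : E y q by rewrite -in_nb hy set22.
have Epy : E p y by rewrite sE.
have Eqy : E q y by rewrite sE.
have deg2 : forall x z, E x z -> deg E x != 1%N -> deg E x = 2.
  move=> x z Exz; have := deg_pos Exz; have := le2 x.
  lia.
have [dp|dp] := eqVneq (deg E p) 1%N; have [dq|dq] := eqVneq (deg E q) 1%N.
- right; exists p, y, q; split => //; split => //.
    exact: nb_deg1.
  exact: nb_deg1.
- left; apply: (deg2_step sE iE LE hy pq dp).
  by rewrite (deg2 _ _ Eqy dq).
- left; apply: (deg2_step sE iE LE (y:=y) (a:=q) (b:=p)) => //.
  + by rewrite set2C.
  + by rewrite eq_sym.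
  + by rewrite (deg2 _ _ Epy dp).
have dp2 := deg2 _ _ Epy dp; have dq2 := deg2 _ _ Eqy dq.
have [p' [p'y hp]] := deg2_other dp2 Epy.
have Epp' : E p p' by rewrite -in_nb hp set22.
have [dp'|dp'] := eqVneq (deg E p') 1%N.
  left; apply: (deg2_step sE iE LE (y:=p) (a:=p') (b:=y)) => //; first by rewrite set2C.
  by rewrite /deg hy cards2 pq.
have dp'2 : deg E p' = 2 by apply: (deg2 _ p) => //; rewrite sE.
left; exists y, p; split => //; apply: rem_Lgood => //.
  right; right => r; rewrite -in_nb hy !inE => /orP[]/eqP-> //; first by rewrite eqxx.
  by rewrite dq2.
right; right => r; rewrite -in_nb hp !inE => /orP[]/eqP-> //; first by rewrite eqxx.
by rewrite dp'2.
Qed.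
End Graph.

Section Lab.
Variables (T : finType) (A : finZmodType).
Implicit Types (E : rel T) (u v w x y z : T) (f : {set T} -> A).
Local Open Scope ring_scope.

Definition wdE E f x := \sum_(y | E x y) f [set x; y].
Definition upd f (s : {set T}) (t : A) : {set T} -> A := fun X => if X == s then t else f X.

Lemma irr_neq E u v : irreflexive E -> E u v -> u != v.
Proof. by move=> iE; apply: contraTneq => ->; rewrite iE. Qed.

Lemma wd_rem E u v f t w : symmetric E -> irreflexive E -> E u v ->
  wdE E (upd f [set u; v] t) w =
  wdE (rem E u v) f w + (if (w == u) || (w == v) then t else 0).
Proof.
move=> sE iE Euv; have uv := irr_neq iE Euv.
rewrite /wdE (bigID (fun y => [set w; y] == [set u; v])) /= addrC; congr (_ + _).
  by apply: eq_big => [y|y /andP[_ h]] //; rewrite /upd (negbTE h).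
have [->|wu] /= := eqVneq w u.
  rewrite (big_pred1 v); last first.
    move=> y; rewrite /= set2_eq_l //; by case: eqP => [->|]; rewrite ?Euv ?andbF.
  by rewrite /upd eqxx.
have [->|wv] /= := eqVneq w v.
  rewrite (big_pred1 u); last first.
    by move=> y; rewrite /= set2_eq_r //; case: eqP => [->|]; rewrite ?andbF // sE Euv.
  by rewrite /upd set2C eqxx.
by rewrite big_pred0 // => y; rewrite (negbTE (set2_neq_out y wu wv)) andbF.
Qed.


Definition shift (c : T -> A) u v t := fun w => c w + (if (w == u) || (w == v) then t else 0).

Lemma transfer E u v (c : T -> A) (W : {set T}) t f' :
  symmetric E -> irreflexive E -> E u v -> t != 0 ->
  (forall a b, rem E u v a b -> f' [set a; b] != 0) ->
  {in W &, injective (fun w => shift c u v t w + wdE (rem E u v) f' w)} ->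
  exists f, (forall a b, E a b -> f [set a; b] != 0) /\
            {in W &, injective (fun w => c w + wdE E f w)}.
Proof.
move=> sE iE Euv t0 nz inj; exists (upd f' [set u; v] t); split.
  move=> a b Eab; rewrite /upd; case: ifP => // /negbT h.
  by apply: nz; rewrite /rem Eab h.
move=> a b aW bW; rewrite !wd_rem // => h; apply: inj => //.
move: h; rewrite /shift => h.
rewrite -!addrA (addrC (if (a == u) || (a == v) then t else 0)).
by rewrite (addrC (if (b == u) || (b == v) then t else 0)).
Qed.

Lemma inj_union (g : T -> A) (I X : {set T}) : {in I &, injective g} ->
  {in X &, injective g} -> (forall i j, i \in I -> j \in X -> g i != g j) ->
  {in I :|: X &, injective g}.
Proof.
move=> iI iX cr a b; rewrite !inE => /orP[aI|aX] /orP[bI|bX] h.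
- exact: iI.
- by move: (cr _ _ aI bX); rewrite h eqxx.
- by move: (cr _ _ bI aX); rewrite h eqxx.
- exact: iX.
Qed.

Lemma inj3 (g : T -> A) x y z : g x != g y -> g x != g z -> g y != g z ->
  {in [set x; y; z] &, injective g}.
Proof.
move=> h1 h2 h3 a b; rewrite !inE => /orP[/orP[]|]/eqP-> /orP[/orP[]|]/eqP-> // h;
  by move: h1 h2 h3; rewrite h eqxx.
Qed.

Lemma pick_out (F : {set A}) (N : nat) : N = #|A| -> (#|F| < N)%N -> exists t, t \notin F.
Proof.
move=> -> h; have : (0 < #|~: F|)%N by have := cardsC F; move=> e; move: h; rewrite -e; lia.
by rewrite card_gt0 => /set0Pn[t]; rewrite inE => ?; exists t.
Qed.


Lemma card_U_le (X Y : {set A}) : (#|X :|: Y| <= #|X| + #|Y|)%N.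
Proof. by rewrite cardsU leq_subr. Qed.

Lemma card_U1_le (a : A) (X : {set A}) : (#|a |: X| <= #|X|.+1)%N.
Proof. by rewrite cardsU1; case: (a \notin X). Qed.

Lemma card_sh (c : T -> A) (I : {set T}) (d : A) : (#|[set (s - d)%R | s in c @: I]| <= #|I|)%N.
Proof. exact: leq_trans (leq_imset_card _ _) (leq_imset_card _ _). Qed.

Lemma card_sub_act E (W : {set T}) : act E \subset W ->
  #|W :\: act E| = (#|W| - #|act E|)%N.
Proof. by move=> aW; rewrite cardsD (setIidPr aW). Qed.

Lemma in3 (w x y z : T) : w \in [set x; y; z] -> [\/ w = x, w = y | w = z].
Proof.
by rewrite !inE => /orP[/orP[]|]/eqP->; [constructor 1|constructor 2|constructor 3].
Qed.

Lemma arith1 (a w k : nat) : (k <= a)%N -> (a <= w)%N -> (w - a + k <= w)%N.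
Proof. lia. Qed.

Lemma arith2 (i w N : nat) : (2 * w <= N + 2)%N -> (i + 3 <= w)%N -> ((i + 1).+1 < N)%N.
Proof. lia. Qed.

Lemma arith3 (i w N : nat) : (2 * w <= N + 2)%N -> (i + 3 <= w)%N -> ((i + (i + 2)).+1 < N)%N.
Proof. lia. Qed.

Lemma card3 (x y z : T) : x != y -> x != z -> y != z -> #|[set x; y; z]| = 3%N.
Proof.
move=> xy xz yz.
have -> : [set x; y; z] = x |: [set y; z] by apply/setP => w; rewrite !inE orbA.
by rewrite cardsU1 cards2 yz !inE negb_or xy xz.
Qed.

Lemma in_sh (c : T -> A) (I : {set T}) i (d : A) : i \in I -> c i - d \in [set s - d | s in c @: I].
Proof. by move=> iI; apply/imsetP; exists (c i) => //; exact: imset_f. Qed.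

Lemma noedge E (c : T -> A) (W : {set T}) : ~~ [exists a, exists b, E a b] ->
  {in W :\: act E &, injective c} ->
  exists f, (forall a b, E a b -> f [set a; b] != 0) /\
            {in W &, injective (fun w => c w + wdE E f w)}.
Proof.
move=> noE ic.
have nE : forall a b, E a b = false.
  move=> a b; apply/negbTE; by apply: contra noE => Eab; apply/existsP; exists a; apply/existsP; exists b.
have actE : act E = set0.
  apply/setP => x; rewrite in_set in_set0; apply/negbTE/existsP => -[y]; by rewrite nE.
exists (fun _ => 0); split; first by move=> a b; rewrite nE.
have wd0 : forall w, wdE E (fun _ => 0) w = 0 by move=> w; rewrite /wdE big_pred0 // => y; rewrite nE.
move=> a b aW bW; rewrite !wd0 !addr0; apply: ic; by rewrite actE setD0.
Qed.

Lemma claim n : forall E (c : T -> A) (W : {set T}),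
  (ne E <= n)%N -> symmetric E -> irreflexive E -> Lgood E -> act E \subset W ->
  {in W :\: act E &, injective c} -> (2 * #|W| <= #|A| + 2)%N ->
  exists f, (forall a b, E a b -> f [set a; b] != 0) /\
            {in W &, injective (fun w => c w + wdE E f w)}.
Proof.
elim: n => [|n IH] E c W hn sE iE LE aW ic hA.
  apply: noedge ic; apply/negP => /existsP[a /existsP[b Eab]].
  have : (0 < ne E)%N by rewrite /ne card_gt0; apply/set0Pn; exists (a, b); rewrite inE.
  by rewrite leqNgt in hn; rewrite (negbTE hn).
have [/existsP[a0 /existsP[b0 Eab]]|noE] := boolP [exists a, exists b, E a b]; last first.
  exact: noedge.
have [N eN hN] : exists2 N, N = #|A| & (2 * #|W| <= N + 2)%N by exists #|A|.
have inA : forall x y, E x y -> x \in act E by move=> x y Exy; rewrite inE; apply/existsP; exists y.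
case: (structure sE iE LE (ex_intro _ a0 (ex_intro _ b0 Eab))) =>
  [[u [v [Euv LE']]] | [x [y [z [xz [Exy Eyz hx hz hy]]]]]].
  set I := W :\: act E.
  have uv := irr_neq iE Euv.
  have uA : u \in act E := inA _ _ Euv.
  have vA : v \in act E by apply: (inA _ u); rewrite sE.
  have cardI : (#|I| + 2 <= #|W|)%N.
    have h1 : (#|[set u; v]| <= #|act E|)%N.
      by apply: subset_leq_card; apply/subsetP => w /set2P[]->.
    have h2 := subset_leq_card aW.
    by rewrite /I card_sub_act // ; move: h1; rewrite cards2 uv; lia.
  pose F := 0 |: ([set s - c u | s in c @: I] :|: [set s - c v | s in c @: I]).
  have [t tF] : exists t, t \notin F.
    apply: (pick_out eN); apply: leq_ltn_trans (card_U1_le _ _) _.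
    apply: (@leq_ltn_trans (#|I| + #|I|).+1); last by move: hN cardI; lia.
    rewrite ltnS; apply: leq_trans (card_U_le _ _) _.
    by apply: leq_add; apply: card_sh.
  have t0 : t != 0 by apply: contraNneq tF => ->; rewrite !inE eqxx.
  have tI : forall i w, i \in I -> w \in [set u; v] -> c i != c w + t.
    move=> i w iI /set2P[]->; apply: contraNneq tF => h; rewrite !inE; apply/orP; right.
      by apply/orP; left; apply/imsetP; exists (c i); [apply: imset_f | rewrite h addrAC subrr add0r].
    by apply/orP; right; apply/imsetP; exists (c i); [apply: imset_f | rewrite h addrAC subrr add0r].
  set E' := rem E u v.
  have notboth : ~~ ((u \notin act E') && (v \notin act E')).
    apply/negP => /andP[]; rewrite !in_act /E' deg_rem_u // deg_rem_v //.
    by move: (LE _ _ Euv); lia.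
  have Iout : forall i, i \in I -> (i == u) || (i == v) = false.
    move=> i; rewrite /I in_setD => /andP[iA _]; apply/negbTE; apply/negP => /orP[]/eqP ie.
      by rewrite ie uA in iA.
    by rewrite ie vA in iA.
  have h1 : (ne E' <= n)%N by move: (ne_rem Euv) hn; rewrite -/E'; lia.
  have h5 : act E' \subset W := subset_trans (act_rem E u v) aW.
  pose X := [set u; v] :\: act E'.
  have h6 : {in W :\: act E' &, injective (shift c u v t)}.
    have sub : W :\: act E' \subset I :|: X.
      apply/subsetP => w; rewrite in_setD => /andP[wA' wW]; rewrite in_setU.
      have [wuv|wuv] := boolP (w \in [set u; v]); first by rewrite /X in_setD wuv wA' orbT.
      move: wuv; rewrite !inE negb_or => /andP[wu wv].
      apply/orP; left; rewrite wW andbT; apply/negP => /existsP[y Ewy]; move/negP: wA'; apply.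
      by rewrite inE; apply/existsP; exists y; rewrite /E' /rem /= Ewy set2_neq_out.
    apply: (sub_in2 (subsetP sub)); apply: inj_union.
    - move=> a b aI bI; rewrite /shift (Iout a aI) (Iout b bI) !addr0; exact: ic.
    - move=> a b; rewrite !in_setD => /andP[aA' /set2P[] ae] /andP[bA' /set2P[] be]; subst a b => // _.
        by move: notboth; rewrite aA' bA'.
      by move: notboth; rewrite aA' bA'.
    - move=> i j iI; rewrite in_setD => /andP[_ jUV].
      rewrite /shift (Iout i iI) addr0; have := jUV; rewrite !inE => ->.
      exact: tI.
  have [f' [nz' inj']] := IH E' (shift c u v t) W h1 (rem_sym u v sE) (rem_irr u v iE) LE' h5 h6 hA.
  exact: (transfer sE iE Euv t0 nz' inj').
set I := W :\: act E.
have xy := irr_neq iE Exy; have yz := irr_neq iE Eyz.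
have yx : y != x by rewrite eq_sym.
have zy : z != y by rewrite eq_sym.
have zx : z != x by rewrite eq_sym.
have xA : x \in act E := inA _ _ Exy.
have yA : y \in act E := inA _ _ Eyz.
have zA : z \in act E by apply: (inA _ y); rewrite sE.
have cardI : (#|I| + 3 <= #|W|)%N.
  have h1 : (#|[set x; y; z]| <= #|act E|)%N.
    by apply: subset_leq_card; apply/subsetP => w /in3[]->; [exact: xA|exact: yA|exact: zA].
  have h2 := subset_leq_card aW.
  by move: h1; rewrite /I card_sub_act // card3 // => h1; apply: arith1.
pose F1 := 0 |: ([set s - c x | s in c @: I] :|: [set c z - c y]).
have [a aF] : exists a, a \notin F1.
  apply: (pick_out eN); apply: leq_ltn_trans (card_U1_le _ _) _.
  apply: (@leq_ltn_trans (#|I| + 1).+1); last exact: arith2 hN cardI.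
  rewrite ltnS; apply: leq_trans (card_U_le _ _) _.
  by apply: leq_add; [apply: card_sh | rewrite cards1].
have an0 : a != 0 by apply: contraNneq aF => ->; rewrite !inE eqxx.
have ax : forall i, i \in I -> c i != c x + a.
  move=> i iI; apply: contraNneq aF => h; rewrite !inE (_ : a = c i - c x) ?in_sh ?orbT //.
  by rewrite h addrAC subrr add0r.
have ayz : c y + a != c z.
  apply: contraNneq aF => h; rewrite !inE (_ : a = c z - c y) ?eqxx ?orbT //.
  by rewrite -h addrAC subrr add0r.
pose F2 := 0 |: ([set s - c z | s in c @: I] :|:
   ([set s - (c y + a) | s in c @: I] :|: [set c x + a - c z; c x - c y])).
have [b bF] : exists b, b \notin F2.
  apply: (pick_out eN); apply: leq_ltn_trans (card_U1_le _ _) _.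
  apply: (@leq_ltn_trans (#|I| + (#|I| + 2)).+1); last exact: arith3 hN cardI.
  rewrite ltnS; apply: leq_trans (card_U_le _ _) _.
  apply: leq_add; first by apply: card_sh.
  apply: leq_trans (card_U_le _ _) _.
  apply: leq_add; first by apply: card_sh.
  by rewrite cards2; case: (_ != _).
have bn0 : b != 0 by apply: contraNneq bF => ->; rewrite !inE eqxx.
have bz : forall i, i \in I -> c i != c z + b.
  move=> i iI; apply: contraNneq bF => h; rewrite !inE (_ : b = c i - c z) ?in_sh ?orbT //.
  by rewrite h addrAC subrr add0r.
have by' : forall i, i \in I -> c i != c y + a + b.
  move=> i iI; apply: contraNneq bF => h; rewrite !inE (_ : b = c i - (c y + a)) ?in_sh ?orbT //.
  by rewrite h addrAC subrr add0r.
have bxz : c x + a != c z + b.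
  apply: contraNneq bF => h; rewrite !inE (_ : b = c x + a - c z) ?eqxx ?orbT //.
  by rewrite h addrAC subrr add0r.
have bxy : c x + a != c y + a + b.
  apply: contraNneq bF => h; rewrite !inE (_ : b = c x - c y) ?eqxx ?orbT //.
  by move: h; rewrite [c y + a + b]addrAC => /addIr ->; rewrite addrAC subrr add0r.
set E1 := rem E x y.
set E2 := rem E1 y z.
have sE1 : symmetric E1 := rem_sym x y sE.
have iE1 : irreflexive E1 := rem_irr x y iE.
have E1yz : E1 y z by rewrite /E1 /rem /= Eyz (set2C x y) set2_eq_l // eq_sym xz.
have sE2 : symmetric E2 := rem_sym y z sE1.
have iE2 : irreflexive E2 := rem_irr y z iE1.
have nbout : forall w, w != x -> w != y -> w != z -> nb E2 w = nb E w.
  by move=> w wx wy wz; rewrite /E2 nb_rem_out // /E1 nb_rem_out.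
have nb0 : forall p, p \in [set x; y; z] -> nb E2 p = set0.
  move=> p /in3[]->.
  - rewrite /E2 nb_rem_out // /E1 nb_rem_u // hx; exact: setDv.
  - rewrite /E2 nb_rem_u // /E1 nb_rem_v // hy; apply/setP => w; rewrite !inE.
    by case: (w == x); case: (w == z).
  - rewrite /E2 nb_rem_v // /E1 nb_rem_out // hz; exact: setDv.
have out2 : forall p q, E2 p q -> p \notin [set x; y; z].
  move=> p q Epq; apply/negP => /nb0 h; have : q \in nb E2 p by rewrite inE.
  by rewrite h inE.
have notin3 : forall w, w \notin [set x; y; z] -> [/\ w != x, w != y & w != z].
  by move=> w; rewrite !inE !negb_or => /andP[/andP[-> ->] ->].
have LE2 : Lgood E2.
  move=> p q Epq.
  have [px py pz] := notin3 _ (out2 _ _ Epq).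
  have [qx qy qz] := notin3 _ (out2 q p (etrans (sE2 q p) Epq)).
  rewrite /deg !nbout //; apply: LE; exact: remE (remE Epq).
have h1 : (ne E2 <= n)%N.
  have hb : (ne E2 < ne E1)%N := ne_rem E1yz.
  have ha : (ne E1 < ne E)%N := ne_rem Exy.
  by rewrite -ltnS; exact: leq_trans hb (leq_trans (ltnW ha) hn).
have h5 : act E2 \subset W.
  exact: subset_trans (act_rem E1 y z) (subset_trans (act_rem E x y) aW).
pose c2 := shift (shift c x y a) y z b.
have c2x : c2 x = c x + a by rewrite /c2 /shift eqxx (negbTE xy) (negbTE xz) addr0.
have c2y : c2 y = c y + a + b by rewrite /c2 /shift eqxx (negbTE yx) orbT.
have c2z : c2 z = c z + b.
  by rewrite /c2 /shift eqxx (negbTE zx) (negbTE zy) orbT addr0.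
have Iout : forall i, i \in I -> [/\ i != x, i != y & i != z].
  move=> i; rewrite /I in_setD => /andP[iA _]; split; apply: contraNneq iA => ->; by [].
have c2I : forall i, i \in I -> c2 i = c i.
  move=> i /Iout[ix iy iz]; by rewrite /c2 /shift (negbTE ix) (negbTE iy) (negbTE iz) !addr0.
have h6 : {in W :\: act E2 &, injective c2}.
  have sub : W :\: act E2 \subset I :|: [set x; y; z].
    apply/subsetP => w; rewrite in_setD => /andP[wA' wW]; rewrite in_setU.
    have [w3|w3] := boolP (w \in [set x; y; z]); first by rewrite orbT.
    have [wx wy wz] := notin3 _ w3.
    by rewrite /I in_setD wW andbT in_act /deg -nbout // -/(deg E2 w) -in_act wA'.
  apply: (sub_in2 (subsetP sub)); apply: inj_union.
  - by move=> p q pI qI; rewrite !c2I //; exact: ic.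
  - apply: inj3; rewrite ?c2x ?c2y ?c2z //.
    apply: contra ayz => /eqP h; apply/eqP; exact: addIr h.
  - move=> i j iI /in3[]->; rewrite (c2I i iI) ?c2x ?c2y ?c2z.
    + exact: ax.
    + exact: by'.
    + exact: bz.
have [f2 [nz2 inj2]] := IH E2 c2 W h1 sE2 iE2 LE2 h5 h6 hA.
have [f1 [nz1 inj1]] := transfer sE1 iE1 E1yz bn0 nz2 inj2.
exact: (transfer sE iE Exy an0 nz1 inj1).
Qed.

End Lab.

From Stdlib Require Import Classical_Prop.

Lemma conn_in (T : finType) (e : rel T) (S : {set T}) x y :
  (forall p q, e p q -> p \in S -> q \in S) -> x \in S -> connect e x y -> y \in S.
Proof.
move=> H xS /connectP[p pth ->]; elim: p x xS pth => //= z p IHp x xS /andP[exz pth].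
by apply: IHp pth; exact: H exz xS.
Qed.

Lemma comp_le (T : finType) (e : rel T) (S : {set T}) x :
  (forall p q, e p q -> p \in S -> q \in S) -> x \in S ->
  (#|[set y | connect e x y]| <= #|S|)%N.
Proof.
move=> H xS; apply: subset_leq_card; apply/subsetP => y; rewrite inE.
exact: conn_in.
Qed.

Lemma least_exists (P : nat -> Prop) : forall k, (0 < k)%N -> P k ->
  exists m, least_pos P m /\ (m <= k)%N.
Proof.
elim/ltn_ind => k IH k0 Pk.
destruct (classic (exists j, (0 < j)%N /\ (j < k)%N /\ P j)) as [[j [j0 [jk Pj]]]|H].
  have [m [lm mj]] := IH j jk j0 Pj.
  by exists m; split => //; exact: leq_trans mj (ltnW jk).
exists k; split => //; split => //; split => // j j0 jk Pj; apply: H; exists j; auto.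
Qed.

Lemma sgstar_2n (T : finType) (e : rel T) : simple_graph e -> no_small_component e ->
  sgstar_prop e (2 * #|T|).
Proof.
move=> [sE iE] nsc A hA.
have nonisol : forall x, exists y, e x y.
  move=> x; have [/existsP//|hx] := boolP [exists y, e x y]; exfalso.
  suff cl : forall p q, e p q -> p \in [set x] -> q \in [set x].
    by have := leq_trans (nsc x) (comp_le cl (set11 x)); rewrite cards1.
  move=> p q epq; rewrite inE => /eqP px; subst p.
  by move: hx; rewrite negb_exists => /forallP/(_ q); rewrite epq.
have LE : Lgood e.
  move=> x y exy; have [//|/norP[dx dy]] := boolP ((1 < deg e x) || (1 < deg e y))%N.
  exfalso; rewrite -leqNgt in dx; rewrite -leqNgt in dy.
  have dx1 : deg e x = 1%N by have := deg_pos exy; move: dx; case: (deg e x) => [|[]].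
  have eyx : e y x by rewrite sE.
  have dy1 : deg e y = 1%N by have := deg_pos eyx; move: dy; case: (deg e y) => [|[]].
  have hx := nb_deg1 exy dx1; have hy := nb_deg1 eyx dy1.
  suff cl : forall p q, e p q -> p \in [set x; y] -> q \in [set x; y].
    have := leq_trans (nsc x) (comp_le cl (set21 x y)); rewrite cards2.
    by case: (x != y).
  move=> p q epq /set2P[] ep; subst p.
    have : q \in nb e x by rewrite inE.
    by rewrite hx inE => /eqP->; rewrite set22.
  have : q \in nb e y by rewrite inE.
  by rewrite hy inE => /eqP->; rewrite set21.
have actT : act e = setT.
  apply/setP => x; rewrite in_act in_setT; have [y exy] := nonisol x; exact: deg_pos exy.
have hW : (2 * #|[set: T]| <= #|A| + 2)%N by rewrite cardsT hA leq_addr.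
have ic : {in [set: T] :\: act e &, injective (fun _ : T => (0%R : A))}.
  by rewrite actT setDv => a b; rewrite in_set0.
have [f [nz inj]] := @claim T A (ne e) e (fun _ => 0%R) setT (leqnn _) sE iE LE (subsetT _) ic hW.
exists f; split => // a b h; apply: inj; rewrite ?in_setT // !add0r; exact: h.
Qed.

Theorem corollary1 (T : finType) (e : rel T) :
  simple_graph e ->
  (0 < #|T|)%N ->
  no_small_component e ->
  exists s s' : nat,
    is_sg e s /\ is_sgstar e s' /\ (s <= s')%N /\ (s' <= 2 * #|T|)%N.
Proof.
move=> sg T0 nsc.
have P2 := sgstar_2n sg nsc.
have pos : (0 < 2 * #|T|)%N by rewrite muln_gt0.
have [s' [[s'0 [Ps' ls']] s'le]] := @least_exists (sgstar_prop e) (2 * #|T|) pos P2.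
have Qs' : sg_prop e s'.
  by move=> A hA; have [f [_ irr]] := Ps' A hA; exists f.
have [s [ls sle]] := @least_exists (sg_prop e) s' s'0 Qs'.
by exists s, s'; split; [exact: ls | split; [split => // | split]].
Qed.
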